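(* Let $s\in\mathbb{N}$ and let $\widehat{g}:\mathbb{N}\to\mathbb{C}$ be an arbitrary arithmetical function. Then the following are equivalent: (i) for every $a\in\mathbb{N}$, the series $g(a)=\sum_{r=1}^{\infty}\widehat{g}(r)\,c_r^{s}(a^s)$ converges absolutely; (ii) for every $a\in\mathbb{N}$, the series $\gamma(a)=a^s\sum_{m=1}^{\infty}\widehat{g}(am)\,\mu(m)$ converges absolutely. Moreover, in case of convergence, $\gamma=\mu*g$, i.e. $\gamma(a)=\sum_{d\mid a}\mu(a/d)g(d)$ for all $a\in\mathbb{N}$.
   Context: For $s\in\mathbb{N}$ and integers $a,b$, $(a,b)_s$ denotes the largest $d^s$ with $d\in\mathbb{N}$ such that $d^s\mid a$ and $d^s\mid b$. The Cohen–Ramanujan sum is defined for $r,s\in\mathbb{N}$ and $n\in\mathbb{Z}$ by $$c_r^{s}(n)=\sum_{\substack{h=1\\ (h,r^s)_s=1}}^{r^s} e^{2\pi i n h/r^s}.$$ $\mu$ is the Möbius function and $*$ denotes Dirichlet convolution. *)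

(* Defs.v *)
From Stdlib Require Import Reals.
From Coquelicot Require Import Coquelicot.
From mathcomp Require Import ssreflect ssrfun ssrbool eqtype ssrnat seq fintype div prime bigop.

Set Implicit Arguments.
Unset Strict Implicit.
Unset Printing Implicit Defensive.

(* (a,b)_s : the largest d^s (d >= 1) dividing both a and b (for a > 0). *)
Definition gcds (s a b : nat) : nat :=
  ((\max_(d < a.+1 | (0 < (d : nat)) && (d ^ s %| a) && (d ^ s %| b)) (d : nat)) ^ s)%N.

Definition csum (l : seq nat) (f : nat -> C) : C :=
  foldr (fun h acc => Cplus (f h) acc) (RtoC 0) l.

Definition e2pi (t : R) : C := (cos (2 * PI * t), sin (2 * PI * t)).

Definition cohen_ramanujan (s r n : nat) : C :=
  csum [seq h <- iota 1 (r ^ s) | gcds s h (r ^ s) == 1%N]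
       (fun h => e2pi (INR n * INR h / INR (r ^ s))).

(* Moebius function (mu 0 := 0, irrelevant). *)
Definition mobius (n : nat) : R :=
  if (0 < n)%N && all (fun p => logn p n == 1%N) (primes n)
  then ((-1) ^ size (primes n))%R else 0%R.

(* Term sequences, indexed from k = 0 for r = k+1 (resp. m = k+1). *)
Definition g_term (s : nat) (ghat : nat -> C) (a k : nat) : C :=
  Cmult (ghat k.+1) (cohen_ramanujan s k.+1 (a ^ s)).

Definition gamma_term (ghat : nat -> C) (a k : nat) : C :=
  Cmult (ghat (a * k.+1)%N) (RtoC (mobius k.+1)).

(* Main.v *)
Require Import Defs.
From Stdlib Require Import Reals.
From Coquelicot Require Import Coquelicot.
From mathcomp Require Import ssreflect ssrfun ssrbool eqtype ssrnat seq fintype div prime bigop.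
From Stdlib Require Import Lra Lia.
From HB Require Import structures.
From mathcomp Require Import zify.

Module Helpers.
Set Implicit Arguments. Unset Strict Implicit. Unset Printing Implicit Defensive.
Local Open Scope nat_scope.

HB.instance Definition _ := Monoid.isComLaw.Build C (RtoC 0) Cplus Cplus_assoc Cplus_comm Cplus_0_l.
HB.instance Definition _ := Monoid.isComLaw.Build R 0%R Rplus (fun x y z => esym (Rplus_assoc x y z)) Rplus_comm Rplus_0_l.


Lemma big_uniq_eq (T : Type) (idx : T) (op : Monoid.com_law idx) (I : eqType) (s1 s2 : seq I) F :
  uniq s1 -> uniq s2 -> s1 =i s2 ->
  \big[op/idx]_(i <- s1) F i = \big[op/idx]_(i <- s2) F i.
Proof. by move=> u1 u2 e; apply: perm_big; apply: uniq_perm. Qed.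

Lemma big_div_compl (T : Type) (idx : T) (op : Monoid.com_law idx) n F : 0 < n ->
  \big[op/idx]_(t <- divisors n) F (n %/ t) = \big[op/idx]_(t <- divisors n) F t.
Proof.
move=> n0; rewrite -(big_map (fun t => n %/ t) xpredT).
apply: big_uniq_eq; last 2 first.
- exact: divisors_uniq.
- move=> x; apply/mapP/idP.
  + by case=> t; rewrite -dvdn_divisors // => tn ->; rewrite -dvdn_divisors //; apply: dvdn_div.
  + rewrite -dvdn_divisors // => xn; exists (n %/ x); first by rewrite -dvdn_divisors //; apply: dvdn_div.
    have x0 : 0 < x by apply: dvdn_gt0 xn; exact: n0.
    by rewrite (divnA n xn) mulKn.
rewrite map_inj_in_uniq ?divisors_uniq // => x y.
rewrite -!dvdn_divisors // => xn yn e.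
have x0 : 0 < x by apply: dvdn_gt0 xn; exact: n0.
have y0 : 0 < y by apply: dvdn_gt0 yn; exact: n0.
by have := congr1 (divn n) e; rewrite (divnA n xn) (divnA n yn) !mulKn.
Qed.

Lemma big_div_mult (T : Type) (idx : T) (op : Monoid.com_law idx) a f G : 0 < a -> f %| a ->
  \big[op/idx]_(d <- divisors a | f %| d) G d =
  \big[op/idx]_(t <- divisors (a %/ f)) G (f * t).
Proof.
move=> a0 fa.
have f0 : 0 < f by apply: dvdn_gt0 fa; exact: a0.
have af0 : 0 < a %/ f by rewrite divn_gt0 // dvdn_leq.
rewrite -big_filter -(big_map (muln f) xpredT).
apply: big_uniq_eq.
- by rewrite filter_uniq // divisors_uniq.
- by rewrite map_inj_uniq ?divisors_uniq // => x y /eqP; rewrite eqn_pmul2l // => /eqP.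
move=> x; rewrite mem_filter -dvdn_divisors //.
apply/andP/mapP.
- case=> fx xa; exists (x %/ f); last by rewrite muln_divA // mulKn.
  by rewrite -dvdn_divisors // dvdn_divRL // divnK.
- case=> t; rewrite -dvdn_divisors // => ta ->; split; first exact: dvdn_mulr _ (dvdnn f).
  by rewrite dvdn_divRL // in ta; rewrite mulnC.
Qed.


Lemma mob1 : mobius 1 = 1%R.
Proof. by rewrite /mobius /=. Qed.

Lemma mob_sq p d : prime p -> p ^ 2 %| d -> mobius d = 0%R.
Proof.
move=> pp pd; rewrite /mobius.
case: (posnP d) => [->|d0] //.
have : p \in primes d by rewrite mem_primes pp d0 /= (dvdn_trans _ pd) // dvdn_exp.
move=> pin.
case: allP => // /(_ p pin) /eqP l1.
by rewrite pfactor_dvdn // l1 in pd.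
Qed.

Lemma mobM p d : prime p -> 0 < d -> ~~ (p %| d) -> mobius (p * d) = (- mobius d)%R.
Proof.
move=> pp d0 pd.
have p0 : 0 < p by apply: prime_gt0.
have pe : perm_eq (primes (p * d)) (p :: primes d).
  apply: uniq_perm; first exact: primes_uniq.
  - by rewrite /= primes_uniq mem_primes pp d0 pd.
  by move=> q; rewrite primesM // primes_prime // !inE.
rewrite /mobius muln_gt0 p0 d0 /= (perm_all _ pe) (perm_size pe) /=.
rewrite lognM // logn_prime // eqxx logn_coprime; last by rewrite prime_coprime.
have -> : all (fun q => logn q (p * d) == 1) (primes d) = all (fun q => logn q d == 1) (primes d).
  apply: eq_in_all => q qin; rewrite lognM // logn_prime //.
  suff -> : (q == p) = false by [].
  by apply/eqP=> e; move: qin; rewrite e mem_primes pp d0 /= (negbTE pd).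
by rewrite addn0 /=; case: ifP => _; lra.
Qed.

Lemma mob_abs n : (Rabs (mobius n) <= 1)%R.
Proof.
rewrite /mobius; case: ifP => _; last by rewrite Rabs_R0; lra.
by rewrite -RPow_abs Rabs_m1 pow1; lra.
Qed.

Lemma mob_sum n : 0 < n ->
  \big[Rplus/0%R]_(d <- divisors n) mobius d = if n == 1 then 1%R else 0%R.
Proof.
move=> n0; case: eqP => [->|/eqP n1].
  by rewrite /divisors /= big_cons big_nil mob1 Rplus_0_r.
have n2 : 1 < n by rewrite ltn_neqAle eq_sym n1.
set p := pdiv n.
have pp : prime p by apply: pdiv_prime.
have pn : p %| n by apply: pdiv_dvd.
have p0 : 0 < p by apply: prime_gt0.
have np0 : 0 < n %/ p by rewrite divn_gt0 // dvdn_leq.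
rewrite (bigID (fun d => p %| d)) /= big_div_mult //.
rewrite (bigID (fun t => p %| t)) /=.
rewrite big1; last first.
  by move=> t pt; apply: (mob_sq pp); rewrite expnS dvdn_pmul2l.
rewrite Rplus_0_l.
have -> : \big[Rplus/0%R]_(i <- divisors (n %/ p) | ~~ (p %| i)) mobius (p * i)
   = \big[Rplus/0%R]_(i <- divisors n | ~~ (p %| i)) (- mobius i)%R.
  rewrite -[LHS]big_filter -[RHS]big_filter; apply: etrans (_ : _ = \big[Rplus/0%R]_(i <- [seq i <- divisors (n %/ p) | ~~ (p %| i)]) (- mobius i)%R) _.
    rewrite !big_seq; apply: eq_bigr => t; rewrite mem_filter -dvdn_divisors // => /andP [pt tn].
    by apply: mobM => //; apply: dvdn_gt0 np0 tn.
  apply: big_uniq_eq; rewrite ?filter_uniq ?divisors_uniq // => t.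
  rewrite !mem_filter -!dvdn_divisors //; case pt: (p %| t) => //=.
  apply/idP/idP => tn.
    by apply: dvdn_trans tn _; apply: dvdn_div.
  have ct : coprime t p by rewrite coprime_sym prime_coprime // pt.
  by rewrite -(Gauss_dvdr _ ct) mulnC divnK.
rewrite -big_split /=; apply: big1 => t _; lra.
Qed.


Lemma pow_lcm_dvd s x y h : 0 < x -> 0 < y -> x ^ s %| h -> y ^ s %| h -> lcmn x y ^ s %| h.
Proof.
move=> x0 y0 xh yh.
set g := gcdn x y.
have g0 : 0 < g by rewrite gcdn_gt0 x0.
set x' := x %/ g; set y' := y %/ g.
have ex : x = x' * g by rewrite divnK // dvdn_gcdl.
have ey : y = y' * g by rewrite divnK // dvdn_gcdr.
have cxy : coprime x' y'.
  by rewrite /coprime -(eqn_pmul2r g0) mul1n muln_gcdl -ex -ey /g eqxx.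
have el : lcmn x y = x' * y' * g.
  apply/eqP; rewrite -(eqn_pmul2r g0) muln_lcm_gcd {1}ex {1}ey.
  apply/eqP; nia.
case/dvdnP: yh => t ht.
rewrite el ht ey !expnMn.
have gs0 : 0 < g ^ s by rewrite expn_gt0 g0.
have : x' ^ s %| t * y' ^ s.
  by rewrite -(dvdn_pmul2r gs0) -expnMn -ex -mulnA -expnMn -ey -ht.
rewrite Gauss_dvdl; last by rewrite coprimeXl // coprimeXr.
by move=> H; rewrite mulnA; apply: dvdn_mul (dvdn_mul H (dvdnn _)) (dvdnn _).
Qed.

Lemma le_pow x s : 0 < x -> 0 < s -> x <= x ^ s.
Proof. by move=> x0 s0; have := leq_pexp2l x0 s0; rewrite expn1. Qed.

Lemma pow_eq1 x s : 0 < x -> 0 < s -> (x ^ s == 1) = (x == 1).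
Proof.
move=> x0 s0; case: (eqVneq x 1) => [->|x1]; first by rewrite exp1n.
apply/negbTE; rewrite neq_ltn; apply/orP; right.
by apply: leq_trans (le_pow x0 s0); rewrite ltn_neqAle eq_sym x1.
Qed.

Lemma gcds_mu s r h : 0 < s -> 0 < r -> 0 < h ->
  (if gcds s h (r ^ s) == 1%N then 1%R else 0%R) =
  \big[Rplus/0%R]_(e <- divisors r | e ^ s %| h) mobius e.
Proof.
move=> s0 r0 h0.
rewrite /gcds.
set P := fun d : 'I_h.+1 => (0 < (d : nat)) && ((d : nat) ^ s %| h) && ((d : nat) ^ s %| r ^ s).
set D := \max_(d < h.+1 | P d) (d : nat).
have cP : 0 < #|P|.
  apply/card_gt0P; exists (Ordinal (h0 : 1 < h.+1)).
  by rewrite unfold_in /P /= exp1n !dvd1n.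
have [i0 Pi0 Dmax] := eq_bigmax_cond (fun d : 'I_h.+1 => (d : nat)) cP.
have DE : D = i0 by rewrite /D -Dmax; apply: eq_bigl => i; rewrite unfold_in.
move: Pi0; rewrite unfold_in /P -DE => /andP [/andP [D0 Dh] Dr].
rewrite dvdn_pexp2r // in Dr.
have mem : forall e, (e \in [seq e <- divisors r | e ^ s %| h]) = (e \in divisors D).
  move=> e; rewrite mem_filter -!dvdn_divisors //.
  apply/andP/idP.
  - case=> eh er.
    have e0 : 0 < e by apply: dvdn_gt0 r0 er.
    set L := lcmn e D.
    have L0 : 0 < L by rewrite lcmn_gt0 e0 D0.
    have Lh : L ^ s %| h by apply: pow_lcm_dvd.
    have Lr : L %| r by rewrite dvdn_lcm er Dr.
    have Lle : L < h.+1 by rewrite ltnS; apply: leq_trans (le_pow L0 s0) (dvdn_leq h0 Lh).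
    have LD : L <= D.
      rewrite /D; apply: (leq_bigmax_cond (Ordinal Lle) (F := fun d : 'I_h.+1 => (d : nat))).
      by rewrite /P /= L0 Lh dvdn_exp2r.
    have DL : D <= L by apply: dvdn_leq L0 (dvdn_lcmr e D).
    have -> : D = L by apply/eqP; rewrite eqn_leq LD DL.
    exact: dvdn_lcml.
  - move=> eD; split; last exact: dvdn_trans eD Dr.
    by apply: dvdn_trans (dvdn_exp2r s eD) Dh.
rewrite -big_filter (big_uniq_eq _ _ _ (s2 := divisors D)) ?filter_uniq ?divisors_uniq //.
by rewrite mob_sum // pow_eq1.
Qed.


Notation "\CS_ ( i <- l | P ) F" := (\big[Cplus/RtoC 0]_(i <- l | P) F) (at level 41, F at level 41, i, l at level 50).
Notation "\CS_ ( i <- l ) F" := (\big[Cplus/RtoC 0]_(i <- l) F) (at level 41, F at level 41, i, l at level 50).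

Lemma csum_big l f : csum l f = \CS_(i <- l) f i.
Proof. by elim: l => [|x l IH]; rewrite ?big_nil ?big_cons //= IH. Qed.

Lemma CS_mull (I : Type) (l : seq I) (P : pred I) f c :
  Cmult c (\CS_(i <- l | P i) f i) = \CS_(i <- l | P i) Cmult c (f i).
Proof.
elim: l => [|x l IH]; rewrite ?big_nil ?big_cons; first by ring.
by case: (P x); rewrite -IH //; ring.
Qed.

Lemma CS_mulr (I : Type) (l : seq I) (P : pred I) f c :
  Cmult (\CS_(i <- l | P i) f i) c = \CS_(i <- l | P i) Cmult (f i) c.
Proof. by rewrite Cmult_comm CS_mull; apply: eq_bigr => i _; rewrite Cmult_comm. Qed.

Lemma RtoC_sum (I : Type) (l : seq I) (P : pred I) f :
  RtoC (\big[Rplus/0%R]_(i <- l | P i) f i) = \CS_(i <- l | P i) RtoC (f i).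
Proof. by apply: (big_morph RtoC) => // x y; rewrite RtoC_plus. Qed.

Lemma e2pi_add x y : e2pi (x + y)%R = Cmult (e2pi x) (e2pi y).
Proof.
rewrite /e2pi /Cmult /=.
have -> : (2 * PI * (x + y) = 2 * PI * x + 2 * PI * y)%R by ring.
by rewrite cos_plus sin_plus; f_equal; ring.
Qed.

Lemma e2pi_nat k : e2pi (INR k) = RtoC 1.
Proof.
rewrite /e2pi /RtoC.
have -> : (2 * PI * INR k = 0 + 2 * INR k * PI)%R by ring.
by rewrite cos_period sin_period cos_0 sin_0.
Qed.

Lemma e2pi_ne1 t : (0 < t < 1)%R -> e2pi t <> RtoC 1.
Proof.
move=> [t0 t1] e.
have c1 : cos (2 * PI * t) = 1%R by move: e; rewrite /e2pi /RtoC; case.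
have : (2 * PI * t = 2 * (PI * t))%R by ring.
move=> h; rewrite h cos_2a_sin in c1.
have := PI_RGT_0 => pi0.
have : (0 < sin (PI * t))%R by apply: sin_gt_0; nra.
nra.
Qed.

Lemma CS_iota1 M (F : nat -> C) : \CS_(j <- iota 1 M) F j = \big[Cplus/RtoC 0]_(j < M) F j.+1.
Proof.
have -> : iota 1 M = index_iota 1 M.+1 by rewrite /index_iota subSS subn0.
by rewrite big_add1 /= big_mkord.
Qed.

Lemma CS_ones M : \big[Cplus/RtoC 0]_(j < M) RtoC 1 = RtoC (INR M).
Proof.
elim: M => [|M IH]; first by rewrite big_ord0.
by rewrite big_ord_recr IH S_INR RtoC_plus.
Qed.

Lemma geom M n : 0 < M ->
  \CS_(j <- iota 1 M) e2pi (INR n * INR j / INR M) = if M %| n then RtoC (INR M) else RtoC 0.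
Proof.
case: M => // M' _; rewrite CS_iota1.
have MR : INR M'.+1 <> 0%R by apply: not_0_INR; lia.
set x := (INR n / INR M'.+1)%R.
have E : forall j, e2pi (INR n * INR j / INR M'.+1) = e2pi (x * INR j).
  by move=> j; congr e2pi; rewrite /x; field.
case: ifP => Mn.
  rewrite -CS_ones; apply: eq_bigr => j _.
  case/dvdnP: Mn => q ->.
  have -> : (INR (q * M'.+1) * INR j.+1 / INR M'.+1 = INR (q * j.+1))%R.
    by rewrite !mult_INR; field.
  exact: e2pi_nat.
under eq_bigr do rewrite E.
set SS := \big[Cplus/RtoC 0]_(j < M'.+1) e2pi (x * INR j.+1).
set z := e2pi x.
have xM : (x * INR M'.+1 = INR n)%R by rewrite /x; field.
have step : forall j, Cmult z (e2pi (x * INR j.+1)) = e2pi (x * INR j.+2).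
  move=> j; rewrite /z -e2pi_add; congr e2pi; rewrite (S_INR j.+1); ring.
have zS : Cmult z SS = SS.
  rewrite /SS CS_mull (eq_bigr (fun j : 'I_M'.+1 => e2pi (x * INR j.+2))); last by move=> j _; apply: step.
  rewrite big_ord_recl big_ord_recr Cplus_comm; congr Cplus.
  change (e2pi (x * INR M'.+2) = e2pi (x * INR 1)).
  rewrite -step xM e2pi_nat Cmult_1_r /z; congr e2pi; rewrite /=; ring.
have z1 : z <> RtoC 1.
  rewrite /z /x (divn_eq n M'.+1) plus_INR mult_INR.
  have -> : ((INR (n %/ M'.+1) * INR M'.+1 + INR (n %% M'.+1)) / INR M'.+1
     = INR (n %/ M'.+1) + INR (n %% M'.+1) / INR M'.+1)%R by field.
  rewrite Rplus_comm e2pi_add e2pi_nat Cmult_1_r.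
  apply: e2pi_ne1.
  have t0 : (0 < n %% M'.+1) by rewrite lt0n -/(dvdn _ _) Mn.
  have t1 : (n %% M'.+1 < M'.+1) by apply: ltn_pmod.
  have Mp : (0 < INR M'.+1)%R by apply: lt_0_INR; lia.
  split; first by apply: Rdiv_lt_0_compat => //; apply: lt_0_INR; lia.
  apply/Rlt_div_l => //; rewrite Rmult_1_l; apply: lt_INR; lia.
have zc : Cminus z (RtoC 1) <> RtoC 0.
  move=> h; apply: z1; have -> : z = Cplus (Cminus z (RtoC 1)) (RtoC 1) by ring.
  by rewrite h Cplus_0_l.
have -> : SS = Cdiv (Cminus (Cmult z SS) SS) (Cminus z (RtoC 1)) by field.
by rewrite zS; field.
Qed.

Lemma filter_mult_iota N q (F : nat -> C) : 0 < q -> q %| N ->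
  \CS_(h <- iota 1 N | q %| h) F h = \CS_(j <- iota 1 (N %/ q)) F (q * j).
Proof.
move=> q0 qN.
rewrite -big_filter -(big_map (muln q) xpredT).
apply: big_uniq_eq.
- by rewrite filter_uniq // iota_uniq.
- by rewrite map_inj_uniq ?iota_uniq // => x y /eqP; rewrite eqn_pmul2l // => /eqP.
move=> h; rewrite mem_filter mem_iota.
apply/andP/mapP.
- case=> qh /andP [h1 hN]; exists (h %/ q); last by rewrite muln_divA // mulKn.
  rewrite mem_iota; apply/andP; split.
    by rewrite divn_gt0 // dvdn_leq.
  by rewrite add1n ltnS leq_divRL // divnK //; move: hN; rewrite add1n ltnS.
- case=> j; rewrite mem_iota => /andP [j1 jN] ->; split; first exact: dvdn_mulr _ (dvdnn q).
  move: jN; rewrite !add1n !ltnS leq_divRL // => jN.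
  by rewrite muln_gt0 q0 j1 /= mulnC.
Qed.

Lemma CR_formula s r n : 0 < s -> 0 < r ->
  cohen_ramanujan s r n =
  \CS_(e <- divisors r) Cmult (RtoC (mobius e))
      (if (r %/ e) ^ s %| n then RtoC (INR ((r %/ e) ^ s)) else RtoC 0).
Proof.
move=> s0 r0.
set N := r ^ s.
set f := fun h => e2pi (INR n * INR h / INR N).
have N0 : 0 < N by rewrite expn_gt0 r0.
rewrite /cohen_ramanujan csum_big big_filter.
rewrite -/N -/f.
transitivity (\CS_(h <- iota 1 N) \CS_(e <- divisors r | e ^ s %| h) Cmult (RtoC (mobius e)) (f h)).
  rewrite big_mkcond; apply: eq_big_seq => h; rewrite mem_iota => /andP [h1 _].
  rewrite -CS_mulr -RtoC_sum -gcds_mu //.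
  by case: ifP => _; rewrite /RtoC /Cmult /=; apply: injective_projections => /=; ring.
under eq_bigr do rewrite big_mkcond.
rewrite exchange_big /=; apply: eq_big_seq => e.
rewrite -dvdn_divisors // => er.
have e0 : 0 < e by apply: dvdn_gt0 r0 er.
rewrite -big_mkcond /= -CS_mull filter_mult_iota; last 2 first.
- by rewrite expn_gt0 e0.
- exact: dvdn_exp2r.
have NE : N %/ e ^ s = (r %/ e) ^ s.
  by rewrite /N -{1}(divnK er) expnMn mulnK // expn_gt0 e0.
rewrite NE -geom; last by rewrite expn_gt0 divn_gt0 // dvdn_leq.
congr Cmult; apply: eq_bigr => j _; rewrite /f; congr e2pi.
rewrite /N -{1 2}(divnK er) !expnMn !mult_INR.
have : (INR (e ^ s) <> 0)%R by apply: not_0_INR; apply/eqP; rewrite -lt0n expn_gt0 e0.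
have : (INR ((r %/ e) ^ s) <> 0)%R by apply: not_0_INR; apply/eqP; rewrite -lt0n expn_gt0 divn_gt0 // dvdn_leq.
move=> h1 h2; rewrite mulnK //; field; split => //.
Qed.


Lemma divnn_inv r e : 0 < r -> e %| r -> r %/ (r %/ e) = e.
Proof.
move=> r0 er; have e0 : 0 < e by apply: dvdn_gt0 r0 er.
by rewrite (divnA r er) mulKn.
Qed.

Lemma L_inner f a : 0 < f -> 0 < a ->
  \big[Rplus/0%R]_(d <- divisors a | f %| d) mobius (a %/ d) = if f == a then 1%R else 0%R.
Proof.
move=> f0 a0; case fa: (f %| a).
  rewrite big_div_mult //.
  have af0 : 0 < a %/ f by rewrite divn_gt0 // dvdn_leq.
  rewrite (eq_big_seq (fun t => mobius ((a %/ f) %/ t))); last first.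
    by move=> t _; rewrite divnMA.
  rewrite (big_div_compl _ (fun t => mobius t)) // mob_sum //.
  have -> : (a %/ f == 1) = (f == a) by apply/eqP/eqP => [h|->]; [rewrite -(divnK fa) h mul1n | rewrite divnn a0].
  by [].
rewrite big1_seq; last first.
  move=> d /andP [fd]; rewrite -dvdn_divisors // => da.
  by move: fa; rewrite (dvdn_trans fd da).
case: eqP => // e; by move: fa; rewrite e dvdnn.
Qed.

Lemma sum_single r a s : 0 < r -> 0 < a ->
  \big[Rplus/0%R]_(e <- divisors r)
     (mobius e * INR ((r %/ e) ^ s) * (if r %/ e == a then 1 else 0))%R
  = if a %| r then (mobius (r %/ a) * INR (a ^ s))%R else 0%R.
Proof.
move=> r0 a0; case ar: (a %| r).
  rewrite (bigD1_seq (r %/ a)) ?divisors_uniq -?dvdn_divisors ?dvdn_div //.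
  rewrite divnn_inv // eqxx big1_seq /= ?Rplus_0_r ?Rmult_1_r //.
  move=> e /andP [ne]; rewrite -dvdn_divisors // => er.
  case: eqP => [h|_]; last by ring.
  by move: ne; rewrite -h divnn_inv // eqxx.
rewrite big1_seq // => e /andP [_]; rewrite -dvdn_divisors // => er.
case: eqP => [h|_]; last by ring.
by rewrite -h dvdn_div in ar.
Qed.

Lemma inversion s r a : 0 < s -> 0 < r -> 0 < a ->
  \CS_(d <- divisors a) Cmult (RtoC (mobius (a %/ d))) (cohen_ramanujan s r (d ^ s))
  = RtoC (if a %| r then (mobius (r %/ a) * INR (a ^ s))%R else 0%R).
Proof.
move=> s0 r0 a0.
rewrite -sum_single // RtoC_sum.
rewrite (eq_big_seq (fun d => \CS_(e <- divisors r) Cmult (RtoC (mobius (a %/ d)))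
   (Cmult (RtoC (mobius e)) (if (r %/ e) ^ s %| d ^ s then RtoC (INR ((r %/ e) ^ s)) else RtoC 0)))); last first.
  by move=> d _; rewrite CR_formula // CS_mull.
rewrite exchange_big /=; apply: eq_big_seq => e; rewrite -dvdn_divisors // => er.
have e0 : 0 < e by apply: dvdn_gt0 r0 er.
have re0 : 0 < r %/ e by rewrite divn_gt0 // dvdn_leq.
rewrite -(@L_inner (r %/ e) a re0 a0) RtoC_mult RtoC_sum CS_mull [RHS]big_mkcond.
apply: eq_bigr => d _; rewrite dvdn_pexp2r //.
by case: ifP => _; rewrite /RtoC /Cmult /=; apply: injective_projections => /=; ring.
Qed.

Lemma swap_form s r b : 0 < s -> 0 < r -> 0 < b ->
  cohen_ramanujan s r (b ^ s) =
  \CS_(d <- divisors b) (if d %| r then RtoC (mobius (r %/ d) * INR (d ^ s))%R else RtoC 0).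
Proof.
move=> s0 r0 b0.
rewrite CR_formula //.
rewrite (eq_big_seq (fun e => (fun t => if t %| b then RtoC (mobius (r %/ t) * INR (t ^ s))%R else RtoC 0) (r %/ e))); last first.
  move=> e; rewrite -dvdn_divisors // => er /=.
  rewrite dvdn_pexp2r // divnn_inv //.
  by case: ifP => _; rewrite /RtoC /Cmult /=; apply: injective_projections => /=; ring.
rewrite (big_div_compl _ (fun t => if t %| b then RtoC (mobius (r %/ t) * INR (t ^ s))%R else RtoC 0)) //.
rewrite -big_mkcond -[RHS]big_mkcond -[LHS]big_filter -[RHS]big_filter.
apply: big_uniq_eq; rewrite ?filter_uniq ?divisors_uniq // => d.
by rewrite !mem_filter -!dvdn_divisors // andbC.
Qed.



Lemma left_zero (G : AbelianMonoid) (w : nat -> G) j : (forall k, k < j -> w k = zero) -> sum_n w j = w j.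
Proof.
elim: j => [|j IH] H; first by rewrite sum_O.
rewrite sum_Sn IH; last by move=> k kj; apply: H; lia.
by rewrite (H j) ?plus_zero_l //.
Qed.

Lemma right_ext (G : AbelianMonoid) (w : nat -> G) B j : (forall i, 0 < i <= j -> w (B + i) = zero) -> sum_n w (B + j) = sum_n w B.
Proof.
elim: j => [|j IH] H; first by rewrite addn0.
have -> : B + j.+1 = S (B + j) by lia.
rewrite sum_Sn IH; last by move=> i hi; apply: H; lia.
have -> : S (B + j) = B + j.+1 by lia.
by rewrite H ?plus_zero_r //; lia.
Qed.

Lemma sparse_sum (G : AbelianMonoid) (w : nat -> G) a : 0 < a -> (forall k, ~~ (a %| k.+1) -> w k = zero) ->
  forall N, sum_n w (a * N + (a - 1)) = sum_n (fun m => w (a * m + (a - 1))) N.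
Proof.
move=> a0 H; elim => [|N IH].
  rewrite sum_O left_zero ?muln0 ?add0n // => k ka.
  apply: H; apply/negP => /(dvdn_leq (ltn0Sn k)); lia.
have -> : a * N.+1 + (a - 1) = S ((a * N + (a - 1)) + (a - 1)) by lia.
rewrite sum_Sn sum_Sn right_ext ?IH.
  by have -> : S (a * N + (a - 1) + (a - 1)) = a * N.+1 + (a - 1) by lia.
move=> i hi; apply: H.
have -> : (a * N + (a - 1) + i).+1 = a * N.+1 + i by lia.
rewrite dvdn_addr ?dvdn_mulr //; apply/negP => /(dvdn_leq (_ : 0 < i)) h.
have : 0 < i by lia.
by move=> /h; lia.
Qed.

Lemma phi_lim a : 0 < a -> filterlim (fun m => a * m + (a - 1)) eventually eventually.
Proof.
move=> a0 P [N HN]; exists N => n nN; apply: HN. nia.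
Qed.

Lemma is_series_sparse (K : AbsRing) (V : NormedModule K) (w : nat -> V) a T :
  0 < a -> (forall k, ~~ (a %| k.+1) -> w k = zero) ->
  is_series w T -> is_series (fun m => w (a * m + (a - 1))) T.
Proof.
move=> a0 H hw; rewrite /is_series.
apply: (filterlim_ext (fun N => sum_n w (a * N + (a - 1)))).
  by move=> N; apply: sparse_sum.
exact: filterlim_comp (phi_lim a0) hw.
Qed.

Lemma sum_n_mono (v : nat -> R) : (forall k, 0 <= v k)%R -> forall n m, n <= m -> (sum_n v n <= sum_n v m)%R.
Proof.
move=> v0 n m nm; have -> : m = n + (m - n) by lia.
elim: (m - n) => [|j IH]; first by rewrite addn0; lra.
have -> : n + j.+1 = S (n + j) by lia.
rewrite sum_Sn; have := v0 (S (n + j)); rewrite /plus /=; lra.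
Qed.

Lemma ex_series_sparse_R (v : nat -> R) a : 0 < a -> (forall k, 0 <= v k)%R ->
  (forall k, ~~ (a %| k.+1) -> v k = 0%R) ->
  ex_series (fun m => v (a * m + (a - 1))) -> ex_series v.
Proof.
move=> a0 v0 H [l hl].
have mono : forall n, (sum_n v n <= sum_n v (S n))%R by move=> n; apply: sum_n_mono => //; lia.
have mono' : forall n, (sum_n (fun m => v (a * m + (a - 1))%N) n <= sum_n (fun m => v (a * m + (a - 1))%N) (S n))%R.
  by move=> n; apply: sum_n_mono => //; lia.
have bd : forall n, (sum_n v n <= l)%R.
  move=> n; apply: Rle_trans (sum_n_mono v0 (_ : n <= a * n + (a - 1))) _; first by nia.
  rewrite sparse_sum //; exact: (is_lim_seq_incr_compare _ l hl mono').
have [l' hl'] : ex_finite_lim_seq (sum_n v) by apply: ex_finite_lim_seq_incr mono bd.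
by exists l'.
Qed.

Lemma ex_series_sub_R (u : nat -> R) a : 0 < a -> (forall k, 0 <= u k)%R ->
  ex_series u -> ex_series (fun m => u (a * m + (a - 1))).
Proof.
move=> a0 u0 hu.
set u' := fun k => if a %| k.+1 then u k else 0%R.
have [l hl] : ex_series u'.
  apply: (ex_series_le _ u) => // k; rewrite /norm /= /abs /= /u'.
  case: ifP => _; [rewrite Rabs_pos_eq //; apply: Rle_refl | rewrite Rabs_R0; apply: u0].
exists l; apply: (is_series_ext (fun m => u' (a * m + (a - 1)))).
  move=> m; rewrite /u'; have -> : (a * m + (a - 1)).+1 = a * m.+1 by lia.
  by rewrite dvdn_mulr.
apply: is_series_sparse => // k; rewrite /u' => /negbTE -> //.
Qed.


Lemma Cmod_CS (l : seq nat) (f : nat -> C) :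
  (Cmod (\CS_(i <- l) f i) <= \big[Rplus/0%R]_(i <- l) Cmod (f i))%R.
Proof.
elim: l => [|x l IH]; rewrite ?big_nil ?big_cons /=; first by rewrite Cmod_0; lra.
apply: Rle_trans (Cmod_triangle _ _) _; lra.
Qed.

Lemma RS_le (l : seq nat) (f g : nat -> R) : (forall i, f i <= g i)%R ->
  (\big[Rplus/0%R]_(i <- l) f i <= \big[Rplus/0%R]_(i <- l) g i)%R.
Proof.
move=> H; elim: l => [|x l IH]; rewrite ?big_nil ?big_cons /=; first lra.
by have := H x; lra.
Qed.

Lemma RS_mull (l : seq nat) (f : nat -> R) c :
  (c * \big[Rplus/0%R]_(i <- l) f i = \big[Rplus/0%R]_(i <- l) (c * f i))%R.
Proof.
elim: l => [|x l IH]; rewrite ?big_nil ?big_cons /=; first by ring.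
by rewrite -IH; ring.
Qed.

Lemma ex_series_RS (l : seq nat) (F : nat -> nat -> R) :
  (forall d, d \in l -> ex_series (F d)) ->
  ex_series (fun m => \big[Rplus/0%R]_(d <- l) F d m).
Proof.
elim: l => [|x l IH] H.
  exists 0%R; apply: (is_series_ext (fun _ => 0%R)); first by move=> n; rewrite big_nil.
  rewrite /is_series; apply: (filterlim_ext (fun _ => 0%R)).
    by elim=> [|n IHn]; rewrite ?sum_O // sum_Sn -IHn /plus /= Rplus_0_r.
  exact: filterlim_const.
apply: (ex_series_ext (fun m => plus (F x m) (\big[Rplus/0%R]_(d <- l) F d m))).
  by move=> n; rewrite big_cons.
apply: ex_series_plus; first by apply: H; rewrite inE eqxx.
by apply: IH => d dl; apply: H; rewrite inE dl orbT.
Qed.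

Lemma is_series_CS (l : seq nat) (F : nat -> nat -> C) (L : nat -> C) :
  (forall d, d \in l -> is_series (F d) (L d)) ->
  is_series (fun k => \CS_(d <- l) F d k) (\CS_(d <- l) L d).
Proof.
elim: l => [|x l IH] H.
  rewrite big_nil; apply: (is_series_ext (fun _ => RtoC 0)); first by move=> n; rewrite big_nil.
  rewrite /is_series; apply: (filterlim_ext (fun _ => RtoC 0)).
    by elim=> [|n IHn]; rewrite ?sum_O // sum_Sn -IHn /plus /= Cplus_0_l.
  exact: filterlim_const.
rewrite big_cons.
apply: (is_series_ext (fun m => plus (F x m) (\CS_(d <- l) F d m))).
  by move=> n; rewrite big_cons.
apply: is_series_plus; first by apply: H; rewrite inE eqxx.
by apply: IH => d dl; apply: H; rewrite inE dl orbT.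
Qed.


Lemma INR_pos n : 0 < n -> (0 < INR n)%R.
Proof. by move=> n0; apply: lt_0_INR; lia. Qed.

Lemma dir1 s ghat a : 0 < s -> 0 < a ->
  (forall a : nat, (0 < a)%N -> ex_series (fun k => Cmod (g_term s ghat a k))) ->
  ex_series (fun k => Cmod (gamma_term ghat a k)).
Proof.
move=> s0 a0 H1.
have as0 : (0 < INR (a ^ s))%R by apply: INR_pos; rewrite expn_gt0 a0.
set b := fun m => (/ INR (a ^ s) * \big[Rplus/0%R]_(d <- divisors a) Cmod (g_term s ghat d (a * m + (a - 1))))%R.
apply: (ex_series_le _ b).
  move=> m; rewrite /norm /= /abs /= Rabs_pos_eq; last exact: Cmod_ge_0.
  rewrite /b; apply: (Rmult_le_reg_l (INR (a ^ s))) => //.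
  rewrite -Rmult_assoc Rinv_r ?Rmult_1_l; last lra.
  set k := a * m + (a - 1).
  have ek : k.+1 = a * m.+1 by rewrite /k; lia.
  have r0 : 0 < k.+1 by [].
  have inv := inversion s0 r0 a0.
  rewrite ek dvdn_mulr // mulKn // -ek in inv.
  rewrite /gamma_term -ek Cmod_mult Cmod_R.
  have -> : (INR (a ^ s) * (Cmod (ghat k.+1) * Rabs (mobius m.+1)))%R
      = Cmod (Cmult (ghat k.+1) (RtoC (mobius m.+1 * INR (a ^ s))%R)).
    by rewrite Cmod_mult Cmod_R Rabs_mult (Rabs_pos_eq (INR _)); [ring | lra].
  rewrite -inv CS_mull; apply: Rle_trans (Cmod_CS _ _) _; apply: RS_le => d.
  rewrite /g_term !Cmod_mult Cmod_R.
  have := mob_abs (a %/ d); have := Cmod_ge_0 (ghat k.+1); have := Cmod_ge_0 (cohen_ramanujan s k.+1 (d ^ s)).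
  have := Rabs_pos (mobius (a %/ d)).
  move=> h1 h2 h3 h4.
  have hP : (0 <= Cmod (ghat k.+1) * Cmod (cohen_ramanujan s k.+1 (d ^ s)))%R by apply: Rmult_le_pos.
  have -> : (Cmod (ghat k.+1) * (Rabs (mobius (a %/ d)) * Cmod (cohen_ramanujan s k.+1 (d ^ s)))
     = Rabs (mobius (a %/ d)) * (Cmod (ghat k.+1) * Cmod (cohen_ramanujan s k.+1 (d ^ s))))%R by ring.
  nra.
apply: (ex_series_scal (V := R_NormedModule) (/ INR (a ^ s))%R).
apply: ex_series_RS => d; rewrite -dvdn_divisors // => da.
apply: (ex_series_sub_R (u := fun k => Cmod (g_term s ghat d k))) => //.
  by move=> k; exact: Cmod_ge_0.
by apply: H1; apply: dvdn_gt0 a0 da.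
Qed.

Lemma dir2 s ghat a : 0 < s -> 0 < a ->
  (forall a : nat, (0 < a)%N -> ex_series (fun k => Cmod (gamma_term ghat a k))) ->
  ex_series (fun k => Cmod (g_term s ghat a k)).
Proof.
move=> s0 a0 H2.
set v := fun d k => if d %| k.+1 then (Cmod (ghat k.+1) * (Rabs (mobius (k.+1 %/ d)) * INR (d ^ s)))%R else 0%R.
apply: (ex_series_le _ (fun k => \big[Rplus/0%R]_(d <- divisors a) v d k)).
  move=> k; rewrite /norm /= /abs /= Rabs_pos_eq; last exact: Cmod_ge_0.
  rewrite /g_term swap_form // Cmod_mult.
  apply: Rle_trans (Rmult_le_compat_l _ _ _ (Cmod_ge_0 _) (Cmod_CS _ _)) _.
  rewrite RS_mull; apply: RS_le => d; rewrite /v.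
  case: ifP => _; last by rewrite Cmod_0 Rmult_0_r; apply: Rle_refl.
  rewrite Cmod_R Rabs_mult (Rabs_pos_eq (INR _)); last exact: pos_INR.
  exact: Rle_refl.
apply: ex_series_RS => d; rewrite -dvdn_divisors // => da.
have d0 : 0 < d by apply: dvdn_gt0 a0 da.
apply: (ex_series_sparse_R (a := d)) => //.
- move=> k; rewrite /v; case: ifP => _; last exact: Rle_refl.
  apply: Rmult_le_pos; first exact: Cmod_ge_0.
  apply: Rmult_le_pos; [exact: Rabs_pos | exact: pos_INR].
- by move=> k; rewrite /v => /negbTE ->.
apply: (ex_series_ext (fun m => scal (INR (d ^ s)) (Cmod (gamma_term ghat d m)))).
  move=> m; rewrite /v /scal /= /mult /=.
  have -> : (d * m + (d - 1)).+1 = d * m.+1 by lia.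
  rewrite dvdn_mulr // mulKn // /gamma_term Cmod_mult Cmod_R; ring.
apply: ex_series_scal; exact: H2.
Qed.

Lemma dir3 s ghat (g : nat -> C) a S : 0 < s -> 0 < a ->
  (forall d : nat, (0 < d)%N -> is_series (g_term s ghat d) (g d)) ->
  is_series (gamma_term ghat a) S ->
  Cmult (RtoC (INR (a ^ s))) S
  = csum (divisors a) (fun d => Cmult (RtoC (mobius (a %/ d))) (g d)).
Proof.
move=> s0 a0 Hg HS.
rewrite csum_big.
set w := fun k => \CS_(d <- divisors a) Cmult (RtoC (mobius (a %/ d))) (g_term s ghat d k).
have hw : is_series w (\CS_(d <- divisors a) Cmult (RtoC (mobius (a %/ d))) (g d)).
  apply: is_series_CS => d; rewrite -dvdn_divisors // => da.
  apply: (is_series_ext (fun k => scal (RtoC (mobius (a %/ d))) (g_term s ghat d k))) => //.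
  apply: is_series_scal; apply: Hg; exact: dvdn_gt0 a0 da.
have wE : forall k, w k = Cmult (ghat k.+1)
    (RtoC (if a %| k.+1 then (mobius (k.+1 %/ a) * INR (a ^ s))%R else 0%R)).
  move=> k; rewrite /w -inversion // CS_mull; apply: eq_bigr => d _; rewrite /g_term; ring.
have sp : forall k, ~~ (a %| k.+1) -> w k = zero.
  move=> k h; rewrite wE (negbTE h); change (Cmult (ghat k.+1) (RtoC 0) = RtoC 0); ring.
have hs := is_series_sparse a0 sp hw.
have hS : is_series (fun m => w (a * m + (a - 1))) (Cmult (RtoC (INR (a ^ s))) S).
  apply: (is_series_ext (fun m => scal (RtoC (INR (a ^ s))) (gamma_term ghat a m))).
    move=> m; rewrite wE.
    have -> : (a * m + (a - 1)).+1 = a * m.+1 by lia.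
    rewrite dvdn_mulr // mulKn // /gamma_term /scal /= RtoC_mult.
    change (Cmult (RtoC (INR (a ^ s))) (Cmult (ghat (a * m.+1)) (RtoC (mobius m.+1)))
      = Cmult (ghat (a * m.+1)) (Cmult (RtoC (mobius m.+1)) (RtoC (INR (a ^ s))))); ring.
  exact: is_series_scal.
exact: (@filterlim_locally_unique nat C_AbsRing C_NormedModule eventually (Proper_StrongProper _ eventually_filter) _ _ _ hS hs).
Qed.


End Helpers.
Import Helpers.

Theorem mainTheorem3 (s : nat) (ghat : nat -> C) :
  (0 < s)%N ->
  ((forall a : nat, (0 < a)%N -> ex_series (fun k => Cmod (g_term s ghat a k)))
   <->
   (forall a : nat, (0 < a)%N -> ex_series (fun k => Cmod (gamma_term ghat a k))))
  /\
  ((forall a : nat, (0 < a)%N -> ex_series (fun k => Cmod (g_term s ghat a k))) ->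
   forall (g : nat -> C),
     (forall d : nat, (0 < d)%N -> is_series (g_term s ghat d) (g d)) ->
   forall (a : nat) (S : C), (0 < a)%N ->
     is_series (gamma_term ghat a) S ->
     Cmult (RtoC (INR (a ^ s))) S
     = csum (divisors a) (fun d => Cmult (RtoC (mobius (a %/ d))) (g d))).
Proof.
move=> s0; split.
  split => H a a0; [exact: (dir1 s0 a0 H) | exact: (dir2 s0 a0 H)].
move=> _ g Hg a S a0 HS; exact: (dir3 s0 a0 Hg HS).
Qed.
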